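(* Let $R$ be a finite commutative chain ring with maximal ideal $\langle a\rangle$, $a$ of nilpotency index $t$, residue field $\mathbb F_q$; let $t_i(X_i)$, $I$, $A$ be as in the context, let $\mathcal K$ be a semisimple code in $A$, and let $G_0,\dots,G_t\in R[X_1,\dots,X_r]$ be an admissible family for $\mathcal K$. Let $\mathcal L$ be the code $\langle\bar G_1,\dots,\bar G_t\rangle+\bar I$ in $\mathbb F_q[X_1,\dots,X_r]/\bar I$, where $\bar I=\langle\bar t_1(X_1),\dots,\bar t_r(X_r)\rangle$. Then $d(\mathcal K)=d(\mathcal L)$.
   Context: Bars denote reduction mod $\langle a\rangle$, coefficientwise on polynomials. For $i=1,\dots,r$, $t_i(X_i)\in R[X_i]$ is monic with $\bar t_i$ square-free; $I=\langle t_1(X_1),\dots,t_r(X_r)\rangle$, $A=R[X_1,\dots,X_r]/I$. A semisimple code is an ideal of $A$. $A$ is a free $R$-module with basis the monomials $X_1^{i_1}\cdots X_r^{i_r}$, $0\le i_k<\deg t_k$, and elements are identified with their coefficient vectors in $R^n$, $n=\prod_k\deg t_k$ (similarly for $\mathbb F_q[X_1,\dots,X_r]/\bar I$ over $\mathbb F_q$). The Hamming weight of a vector is its number of nonzero coordinates, and $d(\cdot)$ of a code is the minimum Hamming weight of its nonzero elements. An admissible family for $\mathcal K$ is a family $G_0,\dots,G_t$ of polynomials with $\bigcap_{i=0}^t\mathrm{Ann}_A\langle G_i+I\rangle=0$, $\mathrm{Ann}_A\langle G_i+I\rangle+\mathrm{Ann}_A\langle G_j+I\rangle=A$ for $i\ne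 j$, and $\mathcal K=\langle G_1,aG_2,\dots,a^{t-1}G_t\rangle+I$. *)

(* Defs.v *)
From HB Require Import structures.
From mathcomp Require Import all_boot all_order all_algebra.
From mathcomp Require Import mpoly.
Set Implicit Arguments. Unset Strict Implicit. Unset Printing Implicit Defensive.
Import GRing.Theory.
Local Open Scope ring_scope.

Definition rdvd (R : comNzRingType) (x y : R) : Prop := exists z, y = x * z.

(* R is a (commutative) chain ring: its (principal, hence all) ideals are
   linearly ordered by inclusion. *)
Definition chain_ring (R : comNzRingType) : Prop :=
  forall x y : R, rdvd x y \/ rdvd y x.

(* <a> is the (unique) maximal ideal of the local ring R *)
Definition max_ideal_gen (R : comUnitRingType) (a : R) : Prop :=
  a \isn't a GRing.unit /\ forall x : R, x \isn't a GRing.unit -> rdvd a x.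

Definition square_free (F : fieldType) (p : {poly F}) : Prop :=
  forall d : {poly F}, (d * d %| p)%R -> (size d <= 1)%N.

Definition polyXk (R : comNzRingType) (r : nat) (k : 'I_r) (p : {poly R})
  : {mpoly R[r]} := \sum_(j < size p) (p`_j)%:MP_[r] * 'X_k ^+ j.

Definition in_ideal (R : comNzRingType) (r n : nat) (g : 'I_n -> {mpoly R[r]})
  (p : {mpoly R[r]}) : Prop :=
  exists h : 'I_n -> {mpoly R[r]}, p = \sum_(i < n) h i * g i.

Definition inI (R : comNzRingType) (r : nat) (tt : 'I_r -> {poly R})
  (p : {mpoly R[r]}) : Prop := in_ideal (fun k => polyXk k (tt k)) p.

(* Ann_A <G + I>, pulled back to R[X] : { p | p * G in I } *)
Definition inAnn (R : comNzRingType) (r : nat) (tt : 'I_r -> {poly R})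
  (G p : {mpoly R[r]}) : Prop := inI tt (p * G).

Definition admissible (R : comNzRingType) (r t : nat) (tt : 'I_r -> {poly R})
  (G : 'I_t.+1 -> {mpoly R[r]}) : Prop :=
  (forall p, (forall i, inAnn tt (G i) p) -> inI tt p) /\
  (forall i j : 'I_t.+1, i != j ->
     exists u v, inAnn tt (G i) u /\ inAnn tt (G j) v /\ inI tt (1 - (u + v))).

(* reduced representatives: the standard monomial basis of A, i.e.
   deg_{X_k} < deg t_k for all k *)
Definition reduced (R : comNzRingType) (r : nat) (tt : 'I_r -> {poly R})
  (p : {mpoly R[r]}) : Prop :=
  forall m, m \in msupp p -> forall k : 'I_r, (m k < (size (tt k)).-1)%N.

Definition hweight (R : comNzRingType) (r : nat) (p : {mpoly R[r]}) : nat :=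
  size (msupp p).

(* elements of the code  <c_1 H_1, ..., c_t H_t> + I  (H = G restricted to
   indices 1..t), given by their reduced representatives *)
Definition in_code (R : comNzRingType) (r t : nat) (tt : 'I_r -> {poly R})
  (gen : 'I_t.+1 -> {mpoly R[r]}) (p : {mpoly R[r]}) : Prop :=
  reduced tt p /\
  exists h : 'I_t.+1 -> {mpoly R[r]},
    inI tt (p - \sum_(i < t.+1 | (0 < i)%N) h i * gen i).

Definition is_min_dist (R : comNzRingType) (r : nat) (C : {mpoly R[r]} -> Prop)
  (d : nat) : Prop :=
  (exists c, C c /\ c != 0 /\ hweight c = d) /\
  (forall c, C c -> c != 0 -> (d <= hweight c)%N).

(* Main.v *)
Require Import Defs.
From HB Require Import structures.
From mathcomp Require Import all_boot all_order all_algebra.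
From mathcomp Require Import mpoly.
From mathcomp Require Import ring zify.
Set Implicit Arguments. Unset Strict Implicit. Unset Printing Implicit Defensive.
Import GRing.Theory.
Local Open Scope ring_scope.

Section IdealLemmas.
Variables (R : comNzRingType) (r : nat) (tt : 'I_r -> {poly R}).

Lemma inI0 : inI tt 0.
Proof. by exists (fun=> 0); rewrite big1 // => i _; rewrite mul0r. Qed.

Lemma inID p q : inI tt p -> inI tt q -> inI tt (p + q).
Proof.
case=> h1 ->; case=> h2 ->; exists (fun i => h1 i + h2 i).
by rewrite -big_split; apply: eq_bigr => i _; rewrite mulrDl.
Qed.

Lemma inIMl q p : inI tt p -> inI tt (q * p).
Proof.
case=> h ->; exists (fun i => q * h i).
by rewrite mulr_sumr; apply: eq_bigr => i _; rewrite mulrA.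
Qed.

Lemma inIMr q p : inI tt p -> inI tt (p * q).
Proof. by move=> H; rewrite mulrC; apply: inIMl. Qed.

Lemma inIN p : inI tt p -> inI tt (- p).
Proof. by move=> H; rewrite -mulN1r; apply: inIMl. Qed.

Lemma inIB p q : inI tt p -> inI tt q -> inI tt (p - q).
Proof. by move=> Hp Hq; apply: inID => //; apply: inIN. Qed.

Lemma inIZ c p : inI tt p -> inI tt (c *: p).
Proof. by move=> H; rewrite -mul_mpolyC; apply: inIMl. Qed.

Lemma inI_sum (I : Type) (s : seq I) (P : pred I) (f : I -> {mpoly R[r]}) :
  (forall i, P i -> inI tt (f i)) -> inI tt (\sum_(i <- s | P i) f i).
Proof.
move=> H; elim/big_rec: _; first exact: inI0.
by move=> i x Pi Hx; apply: inID => //; apply: H.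
Qed.

Lemma inI_gen k : inI tt (polyXk k (tt k)).
Proof.
exists (fun i => (i == k)%:R); rewrite (bigD1 k) //= eqxx mul1r big1 ?addr0 //.
by move=> i /negbTE ->; rewrite mul0r.
Qed.

Lemma inI_prod (I : Type) (s : seq I) (A B : I -> {mpoly R[r]}) :
  (forall i, inI tt (A i - B i)) ->
  inI tt (\prod_(i <- s) A i - \prod_(i <- s) B i).
Proof.
move=> H; elim: s => [|i s IH]; first by rewrite !big_nil subrr; exact: inI0.
rewrite !big_cons.
have -> : A i * \prod_(j <- s) A j - B i * \prod_(j <- s) B j =
   A i * (\prod_(j <- s) A j - \prod_(j <- s) B j) + (A i - B i) * \prod_(j <- s) B j.
  by rewrite mulrBr mulrBl addrA subrK.
by apply: inID; [apply: inIMl | apply: inIMr].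
Qed.

End IdealLemmas.

Section PolyXk.
Variables (R : comNzRingType) (r : nat) (k : 'I_r).
Implicit Types (p q : {poly R}).

Lemma polyXkE (p : {poly R}) :
  polyXk k p = (map_poly (fun c => c%:MP_[r]) p).['X_k].
Proof.
rewrite horner_coef size_map_inj_poly; [|exact: (can_inj (@mpolyCK _ _)) | exact: raddf0].
by apply: eq_bigr => i _; rewrite coef_map.
Qed.

Lemma polyXkD p q : polyXk k (p + q) = polyXk k p + polyXk k q.
Proof. by rewrite !polyXkE rmorphD hornerD. Qed.
Lemma polyXkM p q : polyXk k (p * q) = polyXk k p * polyXk k q.
Proof. by rewrite !polyXkE rmorphM hornerM. Qed.
Lemma polyXkB p q : polyXk k (p - q) = polyXk k p - polyXk k q.
Proof. by rewrite !polyXkE rmorphB hornerD hornerN. Qed.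
Lemma polyXkZ c p : polyXk k (c *: p) = c *: polyXk k p.
Proof. rewrite !polyXkE -mul_polyC rmorphM hornerM -mul_mpolyC; congr (_ * _); by rewrite /= map_polyC hornerC. Qed.
Lemma polyXk0 : polyXk k (0 : {poly R}) = 0.
Proof. by rewrite polyXkE rmorph0 horner0. Qed.
Lemma polyXkXn j : polyXk k ('X^j : {poly R}) = 'X_k ^+ j.
Proof. by rewrite polyXkE map_polyXn hornerXn. Qed.
Lemma polyXk_sum (I : Type) (s : seq I) (P : pred I) (f : I -> {poly R}) :
  polyXk k (\sum_(i <- s | P i) f i) = \sum_(i <- s | P i) polyXk k (f i).
Proof.
elim/big_rec2: _; first exact: polyXk0.
by move=> i x y _ <-; rewrite polyXkD.
Qed.

Lemma polyXk_wide p n : (size p <= n)%N ->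
  polyXk k p = \sum_(j < n) (p`_j)%:MP_[r] * 'X_k ^+ j.
Proof.
move=> le; rewrite /polyXk (big_ord_widen n (fun j => (p`_j)%:MP_[r] * 'X_k ^+ j) le).
rewrite big_mkcond; apply: eq_bigr => j _; case: ifP => // /negbT.
by rewrite -leqNgt => /leq_sizeP ->; rewrite // mul0r.
Qed.

End PolyXk.

Section Reduced.
Variables (R : comNzRingType) (r : nat) (tt : 'I_r -> {poly R}).
Implicit Types (p q : {mpoly R[r]}).

Lemma reduced_sub p q : {subset msupp p <= msupp q} -> reduced tt q -> reduced tt p.
Proof. by move=> S H m /S; apply: H. Qed.

Lemma reduced0 : reduced tt 0.
Proof. by move=> m; rewrite msupp0. Qed.

Lemma reducedD p q : reduced tt p -> reduced tt q -> reduced tt (p + q).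
Proof.
by move=> Hp Hq m /msuppD_le; rewrite mem_cat => /orP [/Hp|/Hq].
Qed.

Lemma reducedZ c p : reduced tt p -> reduced tt (c *: p).
Proof. by move=> H; apply: reduced_sub H; apply: msuppZ_le. Qed.

Lemma reduced_sum (I : Type) (s : seq I) (P : pred I) (f : I -> {mpoly R[r]}) :
  (forall i, P i -> reduced tt (f i)) -> reduced tt (\sum_(i <- s | P i) f i).
Proof.
move=> H; elim/big_rec: _ => [m|i x Pi Hx]; first by rewrite msupp0.
by apply: reducedD => //; apply: H.
Qed.

Lemma msupp_polyXk k (q : {poly R}) m : m \in msupp (polyXk k q) ->
  exists2 j, (j < size q)%N & m = (U_(k) *+ j : 'X_{1..r})%MM.
Proof.
have -> : polyXk k q = \sum_(j < size q) q`_j *: 'X_[(U_(k) *+ j : 'X_{1..r})%MM].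
  by apply: eq_bigr => j _; rewrite mpolyXn mul_mpolyC.
move/msupp_sum_le/flattenP => [s /mapP [j _ ->]] /msuppZ_le.
by rewrite msuppX inE => /eqP ->; exists j.
Qed.

Lemma msupp_prodXk (s : seq 'I_r) (q : 'I_r -> {poly R}) m : uniq s ->
  m \in msupp (\prod_(k <- s) polyXk k (q k)) ->
  forall k, (m k < if k \in s then size (q k) else 1)%N.
Proof.
elim: s m => [|k0 s IH] m.
  by rewrite big_nil msupp1 inE => _ /eqP -> k; rewrite mnm0E.
rewrite big_cons /= => /andP [k0s us] /msuppM_le /allpairsP [[m1 m2] /= [H1 H2 ->]] k.
have [j jlt m1E] := msupp_polyXk H1.
have := IH _ us H2 k; rewrite mnmDE m1E mulmnE mnm1E inE.
case: (eqVneq k0 k) => [<-|nk] /=.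
  by rewrite (negbTE k0s) ltnS leqn0 => /eqP ->; rewrite mul1n addn0.
by rewrite mul0n add0n.
Qed.

End Reduced.

Section Rho.
Variables (R : comNzRingType) (r : nat) (tt : 'I_r -> {poly R}).
Hypothesis mon : forall k, tt k \is monic.
Implicit Types (p q : {mpoly R[r]}).

Definition Hm (m : 'X_{1..r}) : {mpoly R[r]} :=
  \prod_(k < r) polyXk k (Pdiv.Ring.rmodp 'X^(m k) (tt k)).
Definition rho p := \sum_(m <- msupp p) p@_m *: Hm m.

Lemma rho_sub p s : uniq s -> {subset msupp p <= s} ->
  rho p = \sum_(m <- s) p@_m *: Hm m.
Proof.
move=> us sub; rewrite /rho.
have pe : perm_eq s (msupp p ++ [seq m <- s | m \notin msupp p]).
  apply: uniq_perm => //.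
    rewrite cat_uniq msupp_uniq filter_uniq // /= ?andbT.
    by apply/hasPn => m; rewrite mem_filter => /andP [].
  move=> m; rewrite mem_cat mem_filter.
  by case: (boolP (m \in msupp p)) => [/sub -> //|_] /=; rewrite ?andbT ?orbF.
rewrite (perm_big _ pe) big_cat /= [X in _ = _ + X]big1_seq ?addr0 //.
by move=> m /andP [_]; rewrite mem_filter => /andP [/memN_msupp_eq0 -> _]; rewrite scale0r.
Qed.

Lemma rhoD p q : rho (p + q) = rho p + rho q.
Proof.
set s := undup (msupp p ++ msupp q).
have us : uniq s by apply: undup_uniq.
rewrite (@rho_sub (p + q) s) ?(@rho_sub p s) ?(@rho_sub q s) //.
- by rewrite -big_split; apply: eq_bigr => m _; rewrite mcoeffD scalerDl.
- by move=> m H; rewrite mem_undup mem_cat H orbT.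
- by move=> m H; rewrite mem_undup mem_cat H.
- by move=> m /msuppD_le; rewrite mem_undup.
Qed.

Lemma rhoZ c p : rho (c *: p) = c *: rho p.
Proof.
rewrite (@rho_sub _ (msupp p)) ?msupp_uniq //; last exact: msuppZ_le.
by rewrite /rho scaler_sumr; apply: eq_bigr => m _; rewrite mcoeffZ scalerA.
Qed.

Lemma rho0 : rho 0 = 0.
Proof. by have := rhoZ 0 0; rewrite !scale0r. Qed.

Lemma rho_sum (I : Type) (s : seq I) (P : pred I) (f : I -> {mpoly R[r]}) :
  rho (\sum_(i <- s | P i) f i) = \sum_(i <- s | P i) rho (f i).
Proof.
elim/big_rec2: _; first exact: rho0.
by move=> i x y _ <-; rewrite rhoD.
Qed.

Lemma rhoX m : rho 'X_[m] = Hm m.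
Proof. by rewrite /rho msuppX big_seq1 mcoeffX eqxx scale1r. Qed.

Lemma Hm_red m : reduced tt (Hm m).
Proof.
move=> m' /msupp_prodXk => /(_ (index_enum_uniq _)) H k.
have := H k; rewrite mem_index_enum => /leq_trans; apply.
rewrite -ltnS prednK; first by apply: Pdiv.Ring.ltn_rmodpN0; apply: monic_neq0.
by rewrite lt0n size_poly_eq0 monic_neq0.
Qed.

Lemma rho_reduced p : reduced tt (rho p).
Proof. by apply: reduced_sum => m _; apply: reducedZ; apply: Hm_red. Qed.

Lemma rho_id p : reduced tt p -> rho p = p.
Proof.
move=> H; rewrite {2}[p]mpolyE; apply: eq_big_seq => m /H Hmk.
congr (_ *: _); rewrite mpolyXE_id; apply: eq_bigr => k _.
rewrite Pdiv.Ring.rmodp_small ?polyXkXn // size_polyXn -ltn_predRL.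
exact: Hmk.
Qed.

Lemma rho_red p : inI tt (p - rho p).
Proof.
rewrite {1}[p]mpolyE /rho -sumrB; apply: inI_sum => m _.
rewrite -scalerBr; apply: inIZ; rewrite /Hm mpolyXE_id.
apply: inI_prod => k; rewrite -polyXkXn -polyXkB.
rewrite {1}(Pdiv.RingMonic.rdivp_eq (mon k) 'X^(m k)) addrK polyXkM.
by apply: inIMl; apply: inI_gen.
Qed.

Lemma rho_mulX m k : rho ('X_[m] * polyXk k (tt k)) = 0.
Proof.
rewrite /polyXk mulr_sumr rho_sum.
under eq_bigr => j _ do rewrite mul_mpolyC -scalerAr mpolyXn -mpolyXD rhoZ rhoX.
rewrite /Hm.
have Pe j : \prod_(i < r | i != k)
         polyXk i (Pdiv.Ring.rmodp 'X^((m + U_(k) *+ j)%MM i) (tt i)) =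
   \prod_(i < r | i != k) polyXk i (Pdiv.Ring.rmodp 'X^(m i) (tt i)).
  apply: eq_bigr => i ik; rewrite mnmDE mulmnE mnm1E.
  by rewrite eq_sym (negbTE ik) mul0n addn0.
under eq_bigr => j _ do rewrite (bigD1 k) //= scalerAl Pe.
rewrite -mulr_suml.
have -> : \sum_(i < size (tt k))
     (tt k)`_i *: polyXk k (Pdiv.Ring.rmodp 'X^((m + U_(k) *+ i)%MM k) (tt k)) =
   polyXk k (Pdiv.Ring.rmodp ('X^(m k) * tt k) (tt k)).
  have tE : 'X^(m k) * tt k = \sum_(i < size (tt k)) (tt k)`_i *: 'X^(m k + i).
    rewrite -[in LHS](coefK (tt k)) poly_def mulr_sumr.
    by apply: eq_bigr => j _; rewrite -scalerAr -exprD.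
  rewrite tE Pdiv.RingMonic.rmodp_sum // polyXk_sum.
  apply: eq_bigr => j _; rewrite mnmDE mulmnE mnm1E eqxx ?muln1 ?mul1n.
  by rewrite Pdiv.RingMonic.rmodpZ // polyXkZ.
by rewrite Pdiv.RingMonic.rmodp_mull // polyXk0 mul0r.
Qed.

Lemma rho_I p : inI tt p -> rho p = 0.
Proof.
case=> h ->; rewrite rho_sum big1 // => k _.
rewrite [h k]mpolyE mulr_suml rho_sum big1 // => m _.
by rewrite -scalerAl rhoZ rho_mulX scaler0.
Qed.

Lemma uniq_red p : reduced tt p -> inI tt p -> p = 0.
Proof. by move=> Hr Hi; rewrite -(rho_id Hr) rho_I. Qed.

End Rho.

Section Finite.
Variables (R : finComUnitRingType) (r : nat) (tt : 'I_r -> {poly R}).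
Hypothesis mon : forall k, tt k \is monic.
Implicit Types (p q g : {mpoly R[r]}).

Let M := (\sum_(k < r) size (tt k))%N.
Let B := {ffun 'I_r -> 'I_M}.
Let enc p : {ffun B -> R} := [ffun b : B => p@_[multinom (b i : nat) | i < r]].

Lemma red_bound p m : reduced tt p -> m \in msupp p -> forall i, (m i < M)%N.
Proof.
move=> H /H Hm i; apply: (leq_trans (Hm i)); rewrite /M (bigD1 i) //=.
by apply: leq_trans (leq_pred _) (leq_addr _ _).
Qed.

Lemma enc_inj p q : reduced tt p -> reduced tt q -> enc p = enc q -> p = q.
Proof.
move=> Hp Hq E; apply/mpolyP => m.
case: (boolP ((m \in msupp p) || (m \in msupp q))); last first.
  by rewrite negb_or => /andP [/memN_msupp_eq0 -> /memN_msupp_eq0 ->].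
move=> Hm.
have Hk : forall i, (m i < M)%N.
  by case/orP: Hm => [/(red_bound Hp)|/(red_bound Hq)].
pose b : B := [ffun i => Ordinal (Hk i)].
have mb : m = [multinom (b i : nat) | i < r].
  by apply/mnmP => i; rewrite mnmE ffunE.
by move/ffunP: E => /(_ b); rewrite !ffunE -mb.
Qed.

Lemma fin_pow g : exists n1 n2, (n1 < n2)%N /\ inI tt (g ^+ n1 - g ^+ n2).
Proof.
pose f (n : 'I_(#|{ffun B -> R}|.+1)) := enc (rho tt (g ^+ n)).
case: (boolP [exists i : 'I_(#|{ffun B -> R}|.+1), exists j : 'I_(#|{ffun B -> R}|.+1), (i < j)%N && (f i == f j)]).
  case/existsP => i /existsP [j /andP [lij /eqP E]].
  exists i, j; split => //.
  have := enc_inj (@rho_reduced R r tt mon (g ^+ i)) (@rho_reduced R r tt mon (g ^+ j)) E => Er.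
  have -> : g ^+ i - g ^+ j =
      (g ^+ i - rho tt (g ^+ i)) - (g ^+ j - rho tt (g ^+ j)).
    by rewrite Er opprB addrA subrK.
  by apply: inIB; apply: rho_red.
move=> Hn; exfalso.
have inj : injective f.
  move=> i j E; apply/val_inj => /=.
  case: (ltngtP i j) => // lij; move/negP: Hn; case; apply/existsP.
    by exists i; apply/existsP; exists j; rewrite lij E eqxx.
  by exists j; apply/existsP; exists i; rewrite lij E eqxx.
by have := leq_card _ inj; rewrite card_ord ltnn.
Qed.

End Finite.

Lemma fin_choice (T : Type) (x0 : T) n (Q : 'I_n -> T -> Prop) :
  (forall i, exists x, Q i x) -> exists f : 'I_n -> T, forall i, Q i (f i).
Proof.
move=> H.
have : forall s : seq 'I_n, exists f : 'I_n -> T, forall i, i \in s -> Q i (f i).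
  elim=> [|i s [f Hf]]; first by exists (fun=> x0).
  have [x Hx] := H i.
  exists (fun j => if j == i then x else f j) => j; rewrite inE.
  by case: eqP => [-> //|_ /= /Hf].
case/(_ (enum 'I_n)) => f Hf; exists f => i; apply: Hf; by rewrite mem_enum.
Qed.

Lemma mcoeff_build (R : nzRingType) n (f : 'X_{1..n} -> R) (s : seq 'X_{1..n}) m :
  uniq s -> (\sum_(m' <- s) f m' *: 'X_[m'] : {mpoly R[n]})@_m =
            if m \in s then f m else 0.
Proof.
elim: s => [|x s IH]; first by rewrite big_nil mcoeff0.
rewrite big_cons /= inE => /andP [xs us]; rewrite mcoeffD IH // mcoeffZ mcoeffX.
case: (eqVneq x m) => [<-|xm]; first by rewrite (negbTE xs) mulr1 addr0.
by rewrite mulr0 add0r.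
Qed.

Lemma msupp_subP (R R' : nzRingType) n (p : {mpoly R[n]}) (q : {mpoly R'[n]}) :
  (forall m, q@_m = 0 -> p@_m = 0) -> {subset msupp p <= msupp q}.
Proof.
move=> H m; rewrite !mcoeff_msupp; apply: contra => /eqP /H ->; exact: eqxx.
Qed.

Lemma msupp_ne0 (R : nzRingType) n (p : {mpoly R[n]}) m : m \in msupp p -> p != 0.
Proof. by apply: contraTneq => ->; rewrite msupp0. Qed.

Lemma ne0_msupp (R : nzRingType) n (p : {mpoly R[n]}) : p != 0 -> exists m, m \in msupp p.
Proof.
rewrite -msupp_eq0; case: (msupp p) => [|m s] // _; exists m; exact: mem_head.
Qed.

Lemma ident1 (S : comNzRingType) (u v be g : S) :
  (1 - v * be) * g = (1 - (u + v)) * g + u * g + v * ((1 - be) * g).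
Proof. ring. Qed.
Lemma ident2 (S : comNzRingType) (be x : S) : be - x * be = be * (1 - x).
Proof. ring. Qed.

Lemma ident3 (S : comNzRingType) (x y z c : S) : x * (y * (c * z)) = (c * y) * (x * z).
Proof. ring. Qed.
Lemma ident4 (S : comNzRingType) (w be y g : S) : w * (be - y * g * be) = w * be - (w * be * y) * g.
Proof. ring. Qed.
Lemma ident5 (S : comNzRingType) (w b0 A B : S) : w - B = w * (1 - (b0 + A)) + w * b0 + (w * A - B).
Proof. ring. Qed.

Lemma transfer (T1 T2 : comNzRingType) n (C1 : {mpoly T1[n]} -> Prop) (C2 : {mpoly T2[n]} -> Prop) :
  (forall c, C1 c -> c != 0 -> exists l, C2 l /\ l != 0 /\ (hweight l <= hweight c)%N) ->
  (forall l, C2 l -> l != 0 -> exists c, C1 c /\ c != 0 /\ hweight c = hweight l) ->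
  forall d, is_min_dist C1 d <-> is_min_dist C2 d.
Proof.
move=> H1 H2 d; split.
  case=> [[c0 [Cc0 [c00 wc0]]] Hmin].
  have [l0 [Cl0 [l00 wl0]]] := H1 _ Cc0 c00.
  have [c1 [Cc1 [c10 wc1]]] := H2 _ Cl0 l00.
  have := Hmin _ Cc1 c10; rewrite wc1 => le.
  split; first by exists l0; split => //; split => //; apply/eqP; rewrite eqn_leq le -wc0 wl0.
  move=> l Cl l0'; have [c [Cc [c0' <-]]] := H2 _ Cl l0'; exact: Hmin.
case=> [[l0 [Cl0 [l00 wl0]]] Hmin].
have [c0 [Cc0 [c00 wc0]]] := H2 _ Cl0 l00.
split; first by exists c0; split => //; split => //; rewrite wc0.
move=> c Cc c0'; have [l [Cl [l0' le]]] := H1 _ Cc c0'.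
exact: leq_trans (Hmin _ Cl l0') le.
Qed.

Section Main.
Variables (R : finComUnitRingType) (F : finFieldType) (pi : {rmorphism R -> F})
  (a : R) (t r : nat) (tt : 'I_r -> {poly R}) (G : 'I_t.+1 -> {mpoly R[r]}).
Hypotheses (chain : chain_ring R) (maxi : max_ideal_gen a) (t0 : (0 < t)%N)
  (at0 : a ^+ t = 0) (at1 : a ^+ t.-1 != 0)
  (kerpi : forall x : R, pi x = 0 <-> rdvd a x)
  (surj : forall y : F, exists x : R, pi x = y)
  (mon : forall k, tt k \is monic) (adm : admissible tt G).

Let ttb := fun k => map_poly pi (tt k).
Let b := a ^+ t.-1.

Lemma key_at x : b * x = 0 <-> pi x = 0.
Proof.
split => [H|/kerpi [z ->]]; last by rewrite /b mulrA -exprSr prednK // at0 mul0r.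
apply/kerpi; case: (boolP (x \is a GRing.unit)) => [xu|]; last exact: maxi.2.
by move/eqP: at1; rewrite /b -(mulrK xu (a ^+ t.-1)) H mul0r.
Qed.

Lemma ann_a x : a * x = 0 -> exists y, x = b * y.
Proof.
move=> ax; case: (chain x b) => [[z bz]|[y ->]]; last by exists y.
case: (boolP (z \is a GRing.unit)) => [zu|zn].
  by exists z^-1; rewrite bz mulrK.
have [z' zE] := maxi.2 _ zn.
by move/eqP: at1; rewrite -/b bz zE mulrA (mulrC x) ax mul0r.
Qed.

Lemma size_ttb k : size (ttb k) = size (tt k).
Proof.
rewrite /ttb size_map_poly_id0 // (monicP (mon k)) rmorph1; exact: oner_neq0.
Qed.

Lemma map_polyXk (k : 'I_r) (p : {poly R}) :
  map_mpoly pi (polyXk k p) = polyXk k (map_poly pi p).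
Proof.
have le : (size (map_poly pi p) <= size p)%N by exact: size_poly.
rewrite [RHS](polyXk_wide k le) /polyXk rmorph_sum.
apply: eq_bigr => j _.
by rewrite rmorphM /= map_mpolyC rmorphXn /= map_mpolyX coef_map.
Qed.

Lemma inI_map (p : {mpoly R[r]}) : inI tt p -> inI ttb (map_mpoly pi p).
Proof.
case=> h ->; exists (fun k => map_mpoly pi (h k)); rewrite rmorph_sum.
by apply: eq_bigr => k _; rewrite rmorphM /= map_polyXk.
Qed.

Lemma mapZ0 (D : {mpoly R[r]}) : map_mpoly pi D = 0 -> b *: D = 0.
Proof.
move=> H; apply/mpolyP => m; rewrite mcoeffZ mcoeff0; apply/key_at.
by rewrite -mcoeff_map_mpoly H mcoeff0.
Qed.


Let lift (y : F) : R := odflt 0 [pick x | pi x == y].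
Lemma liftK y : pi (lift y) = y.
Proof.
rewrite /lift; case: pickP => [x /eqP //|H]; exfalso.
by have [x Hx] := surj y; move: (H x); rewrite Hx eqxx.
Qed.

Let liftp (q : {mpoly F[r]}) : {mpoly R[r]} := \sum_(m <- msupp q) lift q@_m *: 'X_[m].
Lemma liftp_coef q m : (liftp q)@_m = if m \in msupp q then lift q@_m else 0.
Proof. exact: mcoeff_build (msupp_uniq q). Qed.

Lemma map_liftp q : map_mpoly pi (liftp q) = q.
Proof.
apply/mpolyP => m; rewrite mcoeff_map_mpoly liftp_coef.
case: ifP => [_|/negbT/memN_msupp_eq0 ->]; [exact: liftK | exact: rmorph0].
Qed.

Lemma beta_ex i : exists be : {mpoly R[r]},
  (forall j, j != i -> inI tt (be * G j)) /\ inI tt ((1 - be) * G i).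
Proof.
suff : forall s : seq 'I_t.+1, exists be : {mpoly R[r]},
   (forall j, j \in s -> j != i -> inI tt (be * G j)) /\ inI tt ((1 - be) * G i).
  by case/(_ (enum 'I_t.+1)) => be [H1 H2]; exists be; split => // j; apply: H1; rewrite mem_enum.
elim=> [|j s [be [H1 H2]]].
  by exists 1; split => //; rewrite subrr mul0r; exact: inI0.
case: (eqVneq j i) => [->|ji].
  exists be; split => // j'; rewrite inE => /orP [/eqP -> /eqP //|]; exact: H1.
have [u [v [Hu [Hv Huv]]]] := adm.2 i j (negbT (contraNF (fun e => introT eqP (esym (eqP e))) ji)).
exists (v * be); split.
  move=> j'; rewrite inE => /orP [/eqP -> _|/H1 H /H] .
    by rewrite mulrAC; apply: inIMr.
  by move=> H'; rewrite -mulrA; apply: inIMl.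
have -> : (1 - v * be) * G i = (1 - (u + v)) * G i + u * G i + v * ((1 - be) * G i) by apply: ident1.
apply: inID; [apply: inID => //; exact: inIMr | exact: inIMl].
Qed.

Lemma beta_all : exists be : 'I_t.+1 -> {mpoly R[r]},
  [/\ forall i j, j != i -> inI tt (be i * G j),
      forall i, inI tt ((1 - be i) * G i),
      inI tt (1 - \sum_i be i) &
      forall i, exists y, inI tt (be i - y * G i * be i)].
Proof.
have [be Hbe] := fin_choice 0 beta_ex.
have H1 : forall i j, j != i -> inI tt (be i * G j) by move=> i; case: (Hbe i).
have H2 : forall i, inI tt ((1 - be i) * G i) by move=> i; case: (Hbe i).
have canc : forall i x, inI tt (be i * G i * x) -> inI tt (be i * x).
  move=> i x H; apply: adm.1 => j; rewrite /inAnn.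
  case: (eqVneq j i) => [->|ji]; first by rewrite mulrAC.
  by rewrite mulrAC; apply: inIMr; apply: H1.
have cancn : forall i n x, inI tt (be i * G i ^+ n * x) -> inI tt (be i * x).
  move=> i; elim=> [|n IH] x; first by rewrite expr0 mulr1.
  move=> H; apply: IH; rewrite -mulrA; apply: canc.
  by move: H; rewrite exprS !mulrA.
exists be; split => //.
  apply: adm.1 => j; rewrite /inAnn (bigD1 j) //= opprD addrA mulrDl.
  apply: inID; first exact: H2.
  rewrite mulNr mulr_suml; apply: inIN; apply: inI_sum => i ij; apply: H1; by rewrite eq_sym.
move=> i; have [n1 [n2 [lt E]]] := fin_pow mon (G i).
have E' : inI tt (be i * G i ^+ n1 * (1 - G i ^+ (n2 - n1))).
  rewrite -mulrA mulrBr mulr1 -(exprD (G i) n1 (n2 - n1)) subnKC; [exact: inIMl | exact: ltnW].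
have H := cancn _ _ _ E'; exists (G i ^+ (n2 - n1).-1).
have -> : G i ^+ (n2 - n1).-1 * G i = G i ^+ (n2 - n1) by rewrite -exprSr prednK // subn_gt0.
have -> : be i - G i ^+ (n2 - n1) * be i = be i * (1 - G i ^+ (n2 - n1)) by apply: ident2.
exact: H.
Qed.


Lemma torsion0 (x : {mpoly R[r]}) : inI tt (b *: x) -> inI ttb (map_mpoly pi x).
Proof.
move=> H; set y := rho tt x.
have Hxy : inI tt (x - y) := rho_red mon x.
have by0 : b *: y = 0.
  apply: (uniq_red mon); first exact: reducedZ (@rho_reduced R r tt mon x).
  have -> : b *: y = b *: x - b *: (x - y) by rewrite scalerBr opprB addrC subrK.
  exact: inIB H (inIZ _ Hxy).
have my0 : map_mpoly pi y = 0.
  apply/mpolyP => m; rewrite mcoeff_map_mpoly mcoeff0; apply/key_at.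
  by rewrite -mcoeffZ by0 mcoeff0.
by rewrite -(subrK y x) rmorphD /= my0 addr0; apply: inI_map.
Qed.

Lemma sum_split (V : nmodType) (f : 'I_t.+1 -> V) :
  \sum_i f i = f ord0 + \sum_(i < t.+1 | (0 < i)%N) f i.
Proof.
rewrite (bigD1 ord0) //=; congr (_ + _); apply: eq_bigl => i.
by rewrite lt0n -val_eqE.
Qed.

Lemma torsion (w : {mpoly R[r]}) (h : 'I_t.+1 -> {mpoly R[r]}) :
  inI tt (b *: w - \sum_(i < t.+1 | (0 < i)%N) h i * (a ^+ i.-1 *: G i)) ->
  exists h' : 'I_t.+1 -> {mpoly F[r]},
    inI ttb (map_mpoly pi w - \sum_(i < t.+1 | (0 < i)%N) h' i * map_mpoly pi (G i)).
Proof.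
move=> H; have [be [H1 H2 H3 H4]] := beta_all.
have [y Hy] := fin_choice 0 H4.
have Ha : inI tt (b *: (w * be ord0)).
  have -> : b *: (w * be ord0) =
     be ord0 * (b *: w - \sum_(i < t.+1 | (0 < i)%N) h i * (a ^+ i.-1 *: G i)) +
     \sum_(i < t.+1 | (0 < i)%N) (a ^+ i.-1 *: h i) * (be ord0 * G i).
    rewrite mulrBr mulr_sumr.
    rewrite [X in _ = _ - X + _](eq_bigr (fun i : 'I_t.+1 => (a ^+ i.-1 *: h i) * (be ord0 * G i))).
      by rewrite subrK -scalerAr mulrC.
    by move=> i _; rewrite -!mul_mpolyC ident3.
  apply: inID; first exact: inIMl.
  apply: inI_sum => i Hi; apply: inIMl; apply: H1.
  by rewrite -val_eqE /= -lt0n.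
have Hb := torsion0 Ha.
exists (fun i => map_mpoly pi (w * be i * y i)).
have E : w - \sum_(i < t.+1 | (0 < i)%N) (w * be i * y i) * G i =
   w * (1 - \sum_i be i) + w * be ord0 +
   \sum_(i < t.+1 | (0 < i)%N) w * (be i - y i * G i * be i).
  rewrite (sum_split be).
  rewrite [X in _ = _ + _ + X](eq_bigr (fun i : 'I_t.+1 => w * be i - (w * be i * y i) * G i)); last first.
    by move=> i _; apply: ident4.
  rewrite sumrB -mulr_sumr; exact: ident5.
have -> : map_mpoly pi w - \sum_(i < t.+1 | (0 < i)%N) map_mpoly pi (w * be i * y i) * map_mpoly pi (G i)
  = map_mpoly pi (w - \sum_(i < t.+1 | (0 < i)%N) (w * be i * y i) * G i).
  rewrite rmorphB /= rmorph_sum; congr (_ - _); apply: eq_bigr => i _.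
  by rewrite rmorphM.
rewrite E !rmorphD /=; apply: inID; first apply: inID.
- by apply: inI_map; apply: inIMl.
- exact: Hb.
- apply: inI_map; apply: inI_sum => i _; apply: inIMl; exact: Hy.
Qed.


Lemma claim2 (l : {mpoly F[r]}) :
  in_code ttb (fun i : 'I_t.+1 => map_mpoly pi (G i)) l -> l != 0 ->
  exists c, in_code tt (fun i : 'I_t.+1 => a ^+ i.-1 *: G i) c /\ c != 0 /\
            hweight c = hweight l.
Proof.
case=> Hl [h' [g' Eg]] l0.
set w := liftp l; exists (b *: w).
have Eq : msupp (b *: w) =i msupp l.
  move=> m; rewrite !mcoeff_msupp mcoeffZ liftp_coef mcoeff_msupp.
  case: (eqVneq l@_m 0) => [->|lm] /=; first by rewrite mulr0 eqxx.
  by apply/eqP => /key_at; rewrite liftK; apply/eqP.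
have Hw : hweight (b *: w) = hweight l.
  by rewrite /hweight; apply: perm_size; apply: uniq_perm; rewrite ?msupp_uniq.
split; last split => //.
- split.
    move=> m; rewrite Eq => /Hl H k; have := H k; by rewrite size_ttb.
  exists (fun i : 'I_t.+1 => a ^+ (t - i) *: liftp (h' i)).
  set D := w - \sum_(i < t.+1 | (0 < i)%N) liftp (h' i) * G i -
           \sum_(k < r) liftp (g' k) * polyXk k (tt k).
  have mD : map_mpoly pi D = 0.
    rewrite /D /w !rmorphB /= map_liftp !rmorph_sum /=.
    have -> : \sum_(i < t.+1 | (0 < i)%N) map_mpoly pi (liftp (h' i) * G i) =
              \sum_(i < t.+1 | (0 < i)%N) h' i * map_mpoly pi (G i).
      by apply: eq_bigr => i _; rewrite rmorphM /= map_liftp.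
    have -> : \sum_(k < r) map_mpoly pi (liftp (g' k) * polyXk k (tt k)) =
              \sum_(k < r) g' k * polyXk k (ttb k).
      by apply: eq_bigr => k _; rewrite rmorphM /= map_liftp map_polyXk.
    by rewrite Eg subrr.
  have bD := mapZ0 mD.
  have -> : b *: w - \sum_(i < t.+1 | (0 < i)%N)
      (a ^+ (t - i) *: liftp (h' i)) * (a ^+ i.-1 *: G i) =
      b *: (w - \sum_(i < t.+1 | (0 < i)%N) liftp (h' i) * G i).
    rewrite scalerBr; congr (_ - _); rewrite [RHS]scaler_sumr; apply: eq_bigr => i Hi.
    rewrite -scalerAl -scalerAr scalerA -exprD /b; congr (_ ^+ _ *: _).
    have := ltn_ord i; move: Hi; clear; lia.
  have -> : w - \sum_(i < t.+1 | (0 < i)%N) liftp (h' i) * G i =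
     D + \sum_(k < r) liftp (g' k) * polyXk k (tt k) by rewrite /D subrK.
  rewrite scalerDr bD add0r; apply: inIZ; apply: inI_sum => k _.
  by apply: inIMl; apply: inI_gen.
- have [m Hm] := ne0_msupp l0; apply: (@msupp_ne0 _ _ _ m); by rewrite Eq.
Qed.

Lemma claim1 (c : {mpoly R[r]}) :
  in_code tt (fun i : 'I_t.+1 => a ^+ i.-1 *: G i) c -> c != 0 ->
  exists l, in_code ttb (fun i : 'I_t.+1 => map_mpoly pi (G i)) l /\ l != 0 /\
            (hweight l <= hweight c)%N.
Proof.
case=> Hc [h Eh] c0.
have gen : forall n, a ^+ n *: c = 0 ->
    exists k, a ^+ k *: c != 0 /\ a ^+ k.+1 *: c = 0.
  elim=> [|n IH]; first by rewrite expr0 scale1r => /eqP; rewrite (negbTE c0).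
  move=> H; case: (eqVneq (a ^+ n *: c) 0) => [/IH //|nz]; by exists n.
have [|k [k1 k2]] := gen t; first by rewrite at0 scale0r.
set x := a ^+ k *: c.
have ax : forall m, a * x@_m = 0.
  by move=> m; rewrite /x mcoeffZ mulrA -exprS -mcoeffZ k2 mcoeff0.
pose yd (v : R) := odflt 0 [pick y | v == b * y].
have ydK : forall v, a * v = 0 -> v = b * yd v.
  move=> v av; rewrite /yd; case: pickP => [y /eqP //|H]; exfalso.
  by have [y Hy] := ann_a av; move: (H y); rewrite -Hy eqxx.
set w := \sum_(m <- msupp c) yd x@_m *: 'X_[m].
have wc : forall m, w@_m = if m \in msupp c then yd x@_m else 0.
  by move=> m; apply: mcoeff_build; exact: msupp_uniq.
have bw : b *: w = x.
  apply/mpolyP => m; rewrite mcoeffZ wc.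
  case: ifP => [_|/negbT /memN_msupp_eq0 cm]; first by rewrite -ydK.
  by rewrite mulr0 /x mcoeffZ cm mulr0.
have Hx : inI tt (b *: w - \sum_(i < t.+1 | (0 < i)%N) (a ^+ k *: h i) * (a ^+ i.-1 *: G i)).
  rewrite bw /x.
  have -> : \sum_(i < t.+1 | (0 < i)%N) (a ^+ k *: h i) * (a ^+ i.-1 *: G i) =
     a ^+ k *: \sum_(i < t.+1 | (0 < i)%N) h i * (a ^+ i.-1 *: G i).
    by rewrite scaler_sumr; apply: eq_bigr => i _; rewrite scalerAl.
  rewrite -scalerBr; exact: inIZ.
have [h' Hh'] := torsion Hx.
set l := map_mpoly pi w.
have lc : {subset msupp l <= msupp c}.
  apply: msupp_subP => m cm; rewrite mcoeff_map_mpoly wc.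
  by rewrite mcoeff_msupp cm eqxx /= rmorph0.
exists l; split; last split.
- split; last by exists h'.
  move=> m /lc /Hc H kk; have := H kk; by rewrite size_ttb.
- have [m Hm] := ne0_msupp k1; apply: (@msupp_ne0 _ _ _ m); move: Hm.
  rewrite !mcoeff_msupp mcoeff_map_mpoly -/x -bw mcoeffZ.
  by apply: contra => /eqP /key_at ->.
- by rewrite /hweight; apply: uniq_leq_size; [exact: msupp_uniq | exact: lc].
Qed.

End Main.

Theorem mainTheorem7
  (R : finComUnitRingType) (F : finFieldType) (pi : {rmorphism R -> F})
  (a : R) (t r : nat) (tt : 'I_r -> {poly R}) (G : 'I_t.+1 -> {mpoly R[r]}) :
  chain_ring R ->
  max_ideal_gen a ->
  (0 < t)%N -> a ^+ t = 0 -> a ^+ t.-1 != 0 ->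
  (forall x : R, pi x = 0 <-> rdvd a x) ->
  (forall y : F, exists x : R, pi x = y) ->
  (forall k, tt k \is monic) ->
  (forall k, square_free (map_poly pi (tt k))) ->
  admissible tt G ->
  forall d : nat,
    is_min_dist (in_code tt (fun i : 'I_t.+1 => a ^+ i.-1 *: G i)) d <->
    is_min_dist (in_code (fun k => map_poly pi (tt k))
                         (fun i : 'I_t.+1 => map_mpoly pi (G i))) d.
Proof.
move=> chain maxi t0 at0 at1 kerpi surj mon sqf adm d.
apply: transfer => [c Hc c0|l Hl l0].
  exact: (claim1 chain maxi t0 at0 at1 kerpi mon adm Hc c0).
exact: (claim2 (G := G) maxi t0 at0 at1 kerpi surj mon Hl l0).
Qed.
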